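(* For $n,m\in\mathbb{N}_0$, $$\int_0^{\pi/2}x^n\sin^{2m}(x)\,dx=\frac{1}{4^m}\Big(\frac{\pi}{2}\Big)^n\Bigg(\frac{\pi\binom{2m}{m}}{2(n+1)}-n!\sum_{k=1}^{\infty}\binom{2m}{m+k}\bigg(\sum_{j=1}^{\lfloor (n+1)/2\rfloor}\frac{(-1)^j}{\pi^{2j-1}k^{2j}(n+1-2j)!}-\delta_{\lfloor \frac{n+1}{2}\rfloor,\frac{n+1}{2}}\frac{(-1)^k(-1)^{\lfloor (n+1)/2\rfloor}}{\pi^n k^{n+1}}\bigg)\Bigg).$$
   Context: $\delta_{a,b}$ is the Kronecker delta, so $\delta_{\lfloor \frac{n+1}{2}\rfloor,\frac{n+1}{2}}$ is $1$ if $n$ is odd and $0$ if $n$ is even. $\binom{2m}{m+k}=0$ for integers $k>m$. An empty sum is $0$. *)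

(* Defs.v *)
From Stdlib Require Import Reals Factorial.
From Coquelicot Require Import Coquelicot.
Open Scope R_scope.

Definition binom (n k : nat) : R := if Nat.leb k n then Binomial.C n k else 0.

(* Kronecker delta  delta_{floor((n+1)/2), (n+1)/2}: 1 iff (n+1)/2 is an integer. *)
Definition delta_half (n : nat) : R := if Nat.even (n + 1) then 1 else 0.

Definition inner_term (n k : nat) : R :=
  sum_n_m (fun j : nat =>
      (-1) ^ j / (PI ^ (2 * j - 1) * INR k ^ (2 * j) * INR (Factorial.fact (n + 1 - 2 * j))))
    1 (Nat.div2 (n + 1))
  - delta_half n * ((-1) ^ k * (-1) ^ (Nat.div2 (n + 1)))
      / (PI ^ n * INR k ^ (n + 1)).

Definition summand (n m k : nat) : R := binom (2 * m) (m + k) * inner_term n k.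

(* Main.v *)
Require Import Defs.
From Stdlib Require Import Reals Factorial.
From Coquelicot Require Import Coquelicot.
Open Scope R_scope.

From Stdlib Require Import Lia Lra.

Fixpoint ssum (f : nat -> R) (N : nat) : R :=
  match N with O => 0 | S N => ssum f N + f N end.

Lemma ssum_ext f g N : (forall k, (k < N)%nat -> f k = g k) -> ssum f N = ssum g N.
Proof. induction N; simpl; intros H; auto. rewrite IHN by (intros; apply H; lia). rewrite H by lia. auto. Qed.

Lemma ssum_plus f g N : ssum (fun k => f k + g k) N = ssum f N + ssum g N.
Proof. induction N; simpl; [lra|]. rewrite IHN; lra. Qed.

Lemma ssum_scal c f N : ssum (fun k => c * f k) N = c * ssum f N.
Proof. induction N; simpl; [lra|]. rewrite IHN; lra. Qed.

Lemma ssum_first f N : ssum f (S N) = f O + ssum (fun k => f (S k)) N.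
Proof. induction N; simpl in *; [lra|]. rewrite IHN; lra. Qed.

Lemma ssum_zero_tail f N M : (N <= M)%nat -> (forall k, (N <= k)%nat -> f k = 0) -> ssum f M = ssum f N.
Proof. intros H Hz; induction H; simpl; auto. rewrite IHle, Hz by lia. lra. Qed.

Lemma sin_kPI k : sin (INR k * PI) = 0.
Proof. induction k. simpl. rewrite Rmult_0_l; apply sin_0.
rewrite S_INR, Rmult_plus_distr_r, Rmult_1_l, neg_sin, IHk; lra. Qed.

Lemma cos_kPI k : cos (INR k * PI) = (-1)^k.
Proof. induction k. simpl. rewrite Rmult_0_l; apply cos_0.
rewrite S_INR, Rmult_plus_distr_r, Rmult_1_l, neg_cos, IHk; simpl; lra. Qed.

Lemma series_finite u N : (forall k, (N <= k)%nat -> u k = 0) -> Series u = ssum u N.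
Proof.
intros Hz. unfold Series.
assert (H: forall k, sum_n u k = ssum u (S k)).
{ induction k. rewrite sum_O. simpl; lra. rewrite sum_Sn, IHk. simpl. reflexivity. }
rewrite (Lim_seq_ext_loc _ (fun _ => ssum u N)). rewrite Lim_seq_const. reflexivity.
exists N. intros k Hk. rewrite H. apply ssum_zero_tail; auto; lia.
Qed.

Lemma binom_zero n k : (n < k)%nat -> binom n k = 0.
Proof. intros H; unfold binom. replace (Nat.leb k n) with false; auto. symmetry; apply Nat.leb_gt; lia. Qed.

Lemma binom_pascal n i : binom (S n) (S i) = binom n i + binom n (S i).
Proof.
destruct (Nat.lt_total i n) as [H|[H|H]].
- unfold binom. rewrite !(proj2 (Nat.leb_le _ _)) by lia. rewrite pascal; auto.
- subst. unfold binom. rewrite !(proj2 (Nat.leb_le _ _)) by lia.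
  rewrite (proj2 (Nat.leb_gt _ _)) by lia. rewrite !C_n_n; lra.
- rewrite !binom_zero by lia. lra.
Qed.

Lemma binom_sym n k : (k <= n)%nat -> binom n k = binom n (n - k).
Proof. intros H; unfold binom. rewrite !(proj2 (Nat.leb_le _ _)) by lia. apply pascal_step1; auto. Qed.

Lemma c_rec m j : binom (2 * S m) (S m + S j) =
  binom (2*m) (m + j) + 2 * binom (2*m) (m + S j) + binom (2*m) (m + S (S j)).
Proof.
replace (2 * S m)%nat with (S (S (2*m))) by lia.
replace (S m + S j)%nat with (S (S (m+j))) by lia.
rewrite !binom_pascal. replace (S (m+j)) with (m + S j)%nat by lia.
replace (S (m + S j)) with (m + S (S j))%nat by lia. lra.
Qed.

Lemma c_rec0 m : binom (2 * S m) (S m) = 2 * binom (2*m) m + 2 * binom (2*m) (m + 1).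
Proof.
destruct m.
- unfold binom, Binomial.C; simpl. field.
- replace (2 * S (S m))%nat with (S (S (2*S m))) by lia.
  rewrite (binom_pascal (S (2 * S m)) (S m)).
  rewrite (binom_pascal (2 * S m) m), (binom_pascal (2 * S m) (S m)).
  rewrite (binom_sym (2 * S m) m) by lia.
  replace (2 * S m - m)%nat with (S m + 1)%nat by lia. replace (S (S m)) with (S m + 1)%nat by lia. lra.
Qed.

Lemma ssum_opp f N : ssum (fun k => - f k) N = - ssum f N.
Proof. induction N; simpl; [lra|]. rewrite IHN; lra. Qed.

Lemma ssum_0 N : ssum (fun _ => 0) N = 0.
Proof. induction N; simpl; lra. Qed.

Lemma cos_prod k x : 2 * cos (2 * x) * cos (2 * INR (S k) * x) =
  cos (2 * INR (S (S k)) * x) + cos (2 * INR k * x).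
Proof.
rewrite !S_INR.
replace (2 * (INR k + 1 + 1) * x) with (2 * (INR k + 1) * x + 2 * x) by ring.
replace (2 * INR k * x) with (2 * (INR k + 1) * x - 2 * x) by ring.
rewrite cos_plus, cos_minus. ring.
Qed.

Definition Fs m N x := ssum (fun k => (-1)^(S k) * binom (2*m) (m + S k) * cos (2 * INR (S k) * x)) N.

Lemma fourier m : forall N x, (m < N)%nat -> 4^m * sin x ^ (2*m) = binom (2*m) m + 2 * Fs m N x.
Proof.
induction m; intros N x HN.
- unfold Fs. rewrite (ssum_ext _ (fun _ => 0)). rewrite ssum_0. unfold binom, Binomial.C; simpl. field.
  intros k _. rewrite binom_zero by lia. ring.
- destruct N as [|N']; [lia|].
  assert (IH := IHm (S N') x ltac:(lia)).
  set (c := fun j => binom (2*m) (m + j)).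
  set (s := fun k => (-1)^(S k)).
  set (CC := fun j => cos (2 * INR j * x)).
  assert (Hc0 : forall j, (m < j)%nat -> c j = 0). { intros j Hj; unfold c; apply binom_zero; lia. }
  set (X1 := ssum (fun k => s k * c k * CC (S k)) (S N')).
  set (X2 := ssum (fun k => s k * c (S k) * CC (S k)) (S N')).
  set (X3 := ssum (fun k => s k * c (S (S k)) * CC (S k)) (S N')).
  set (Y1 := ssum (fun k => s k * c (S k) * CC (S (S k))) (S N')).
  set (Y2 := ssum (fun k => s k * c (S k) * CC k) (S N')).
  assert (EF1 : Fs (S m) (S N') x = X1 + 2 * X2 + X3).
  { unfold Fs, X1, X2, X3. rewrite <- ssum_scal, <- !ssum_plus. apply ssum_ext. intros k _.
    rewrite c_rec. unfold s, c, CC. ring. }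
  assert (EF0 : Fs m (S N') x = X2). { reflexivity. }
  assert (EY : 2 * cos (2 * x) * X2 = Y1 + Y2).
  { unfold X2, Y1, Y2. rewrite <- ssum_plus, <- ssum_scal. apply ssum_ext. intros k _.
    unfold CC. replace (2 * cos (2 * x) * (s k * c (S k) * cos (2 * INR (S k) * x)))
      with (s k * c (S k) * (2 * cos (2 * x) * cos (2 * INR (S k) * x))) by ring.
    rewrite cos_prod. ring. }
  assert (EX1 : X1 = - Y1 - c O * CC 1%nat).
  { unfold X1, Y1. rewrite ssum_first. cbn [ssum].
    rewrite (Hc0 (S N')) by lia.
    replace (ssum (fun k : nat => s (S k) * c (S k) * CC (S (S k))) N') with
      (- ssum (fun k : nat => s k * c (S k) * CC (S (S k))) N').
    unfold s. ring.
    rewrite <- ssum_opp.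
    apply ssum_ext; intros; unfold s; simpl; ring. }
  assert (EX3 : X3 = - Y2 - c 1%nat).
  { unfold X3, Y2. rewrite (ssum_first (fun k => s k * c (S k) * CC k)). cbn [ssum].
    rewrite (Hc0 (S (S N'))) by lia.
    replace (ssum (fun k : nat => s (S k) * c (S (S k)) * CC (S k)) N') with
      (- ssum (fun k : nat => s k * c (S (S k)) * CC (S k)) N').
    replace (CC O) with 1 by (unfold CC; simpl INR; rewrite Rmult_0_r, Rmult_0_l; symmetry; apply cos_0). unfold s. ring.
    rewrite <- ssum_opp.
    apply ssum_ext; intros; unfold s; simpl; ring. }
  rewrite EF1, c_rec0.
  replace (2 * S m)%nat with (2 + 2*m)%nat by lia. rewrite pow_add, <- tech_pow_Rmult.
  replace (4 * 4 ^ m * (sin x ^ 2 * sin x ^ (2 * m))) with ((4 * sin x ^ 2) * (4^m * sin x ^ (2*m))) by ring.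
  rewrite IH, EF0.
  replace (4 * sin x ^ 2) with (2 - 2 * cos (2 * x)) by (rewrite cos_2a_sin; ring).
  fold (c O) in *. replace (binom (2*m) (m+1)) with (c 1%nat) by reflexivity.
  replace (binom (2*m) m) with (c O) by (unfold c; rewrite Nat.add_0_r; reflexivity).
  rewrite EX1, EX3. unfold CC at 1. simpl INR.
  replace (2 * 1 * x) with (2 * x) by ring.
  replace ((2 - 2 * cos (2 * x)) * (c 0%nat + 2 * X2)) with
     (2 * c O + 4 * X2 - 2 * c O * cos (2 * x) - 2 * (2 * cos (2*x) * X2)) by ring.
  rewrite EY. ring.
Qed.

Lemma pm1 K : (-1)^K = 1 \/ (-1)^K = -1.
Proof. induction K; simpl; [left; ring|]. destruct IHK as [H|H]; rewrite H; [right|left]; ring. Qed.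

Lemma RInt_lin (f g : R -> R) c d a b : ex_RInt f a b -> ex_RInt g a b ->
  RInt (fun x => c * f x + d * g x) a b = c * RInt f a b + d * RInt g a b.
Proof.
intros Hf Hg. apply is_RInt_unique.
apply (is_RInt_plus (V:=R_NormedModule) (fun x => c * f x) (fun x => d * g x)).
- apply (is_RInt_scal (V:=R_NormedModule) f a b c). exact (RInt_correct f a b Hf).
- apply (is_RInt_scal (V:=R_NormedModule) g a b d). exact (RInt_correct g a b Hg).
Qed.



Definition Ic (K n : nat) := RInt (fun x => x^n * cos (2 * INR K * x)) 0 (PI/2).
Definition Js (K n : nat) := RInt (fun x => x^n * sin (2 * INR K * x)) 0 (PI/2).

Lemma exI (K n : nat) : ex_RInt (fun x => x^n * cos (2 * INR K * x)) 0 (PI/2).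
Proof. apply (ex_RInt_continuous (V:=R_CompleteNormedModule)); intros; apply (ex_derive_continuous (V:=R_NormedModule)); auto_derive; auto. Qed.
Lemma exJ (K n : nat) : ex_RInt (fun x => x^n * sin (2 * INR K * x)) 0 (PI/2).
Proof. apply (ex_RInt_continuous (V:=R_CompleteNormedModule)); intros; apply (ex_derive_continuous (V:=R_NormedModule)); auto_derive; auto. Qed.

Lemma Kpi_s (K : nat) : sin (2 * INR K * (PI/2)) = 0.
Proof. replace (2 * INR K * (PI/2)) with (INR K * PI) by field. apply sin_kPI. Qed.
Lemma Kpi_c (K : nat) : cos (2 * INR K * (PI/2)) = (-1)^K.
Proof. replace (2 * INR K * (PI/2)) with (INR K * PI) by field. apply cos_kPI. Qed.

Lemma minusR (x y : R) : minus x y = x - y. Proof. reflexivity. Qed.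

Lemma FTC_lin (F f g : R -> R) c d a b :
  (forall x, is_derive F x (c * f x + d * g x)) ->
  (forall x, continuous (fun x => c * f x + d * g x) x) ->
  ex_RInt f a b -> ex_RInt g a b ->
  c * RInt f a b + d * RInt g a b = F b - F a.
Proof.
intros HD HC Hf Hg. rewrite <- RInt_lin by assumption.
rewrite <- minusR. apply is_RInt_unique. apply (is_RInt_derive (V:=R_CompleteNormedModule)); auto.
Qed.

Lemma DI (K n : nat) : INR (S n) * Js K n + 2 * INR K * Ic K (S n) = 0.
Proof.
unfold Js, Ic.
rewrite (FTC_lin (fun x => x^(S n) * sin (2 * INR K * x)) (fun x => x^n * sin (2*INR K*x))
  (fun x => x^(S n) * cos (2*INR K*x))).
- rewrite (Kpi_s K), Rmult_0_r, Rmult_0_r, sin_0. ring.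
- intros; auto_derive; auto. rewrite S_INR. destruct n; simpl; ring.
- intros; apply (ex_derive_continuous (V:=R_NormedModule)); auto_derive; auto.
- exact (exJ K n).
- exact (exI K (S n)).
Qed.

Lemma DJ (K n : nat) : INR (S n) * Ic K n + (- (2 * INR K)) * Js K (S n) = (PI/2)^(S n) * (-1)^K.
Proof.
unfold Js, Ic.
rewrite (FTC_lin (fun x => x^(S n) * cos (2 * INR K * x)) (fun x => x^n * cos (2*INR K*x))
  (fun x => x^(S n) * sin (2*INR K*x))).
- rewrite (Kpi_c K). simpl. ring.
- intros; auto_derive; auto. rewrite S_INR. destruct n; simpl; ring.
- intros; apply (ex_derive_continuous (V:=R_NormedModule)); auto_derive; auto.
- exact (exI K n).
- exact (exJ K (S n)).
Qed.

Lemma DI0 (K : nat) (HK : (0 < K)%nat) : Ic K 0 = 0.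
Proof.
assert (HKn : INR K <> 0) by (apply not_0_INR; lia).
assert (E: 0 * RInt (fun _ => 0) 0 (PI/2) + 2 * INR K * Ic K 0 = 0).
{ unfold Ic.
rewrite (FTC_lin (fun x => sin (2 * INR K * x)) (fun x => 0)
  (fun x => x^0 * cos (2*INR K*x))).
- rewrite (Kpi_s K), Rmult_0_r, sin_0. ring.
- intros; auto_derive; auto. ring.
- intros; apply (ex_derive_continuous (V:=R_NormedModule)); auto_derive; auto.
- apply (ex_RInt_const (V:=R_CompleteNormedModule)).
- exact (exI K 0). }
apply Rmult_eq_reg_l with (2 * INR K). lra. lra.
Qed.

Lemma DJ0 (K : nat) : - (2 * INR K) * Js K 0 = (-1)^K - 1.
Proof.
assert (E: 0 * RInt (fun _ => 0) 0 (PI/2) + - (2 * INR K) * Js K 0 = (-1)^K - 1).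
{ unfold Js.
rewrite (FTC_lin (fun x => cos (2 * INR K * x)) (fun x => 0)
  (fun x => x^0 * sin (2*INR K*x))).
- rewrite (Kpi_c K), Rmult_0_r, cos_0. ring.
- intros; auto_derive; auto. ring.
- intros; apply (ex_derive_continuous (V:=R_NormedModule)); auto_derive; auto.
- apply (ex_RInt_const (V:=R_CompleteNormedModule)).
- exact (exJ K 0). }
lra.
Qed.

Lemma fterm_shift n K j : (1 <= j)%nat -> INR K <> 0 ->
  (-1) ^ S j / (PI ^ (2 * S j - 1) * INR K ^ (2 * S j) * INR (fact (S (S n) + 1 - 2 * S j)))
  = - / (PI^2 * INR K^2) * ((-1) ^ j / (PI ^ (2 * j - 1) * INR K ^ (2 * j) * INR (fact (n + 1 - 2 * j)))).
Proof.
intros Hj HK.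
replace (S (S n) + 1 - 2 * S j)%nat with (n + 1 - 2 * j)%nat by lia.
replace (2 * S j - 1)%nat with ((2 * j - 1) + 2)%nat by lia.
replace (2 * S j)%nat with ((2 * j) + 2)%nat by lia.
rewrite !pow_add. simpl pow at 1.
assert (PI <> 0) by (apply PI_neq0).
assert (INR (fact (n + 1 - 2 * j)) <> 0) by apply INR_fact_neq_0.
field. repeat split; auto; apply pow_nonzero; auto.
Qed.

Lemma inner_rec n K : INR K <> 0 ->
  inner_term (S (S n)) K = - / (PI * INR K ^ 2 * INR (fact (S n))) - inner_term n K / (PI^2 * INR K^2).
Proof.
intros HK. unfold inner_term.
replace (Nat.div2 (S (S n) + 1)) with (S (Nat.div2 (n + 1))) by (replace (S (S n) + 1)%nat with (S (S (n+1))) by lia; reflexivity).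
replace (delta_half (S (S n))) with (delta_half n) by (unfold delta_half; replace (S (S n) + 1)%nat with (S (S (n+1))) by lia; reflexivity).
rewrite sum_Sn_m by (apply le_n_S, Nat.le_0_l).
rewrite <- sum_n_m_S.
rewrite (sum_n_m_ext_loc _ (fun j => mult (- / (PI^2 * INR K^2)) ((-1) ^ j / (PI ^ (2 * j - 1) * INR K ^ (2 * j) * INR (fact (n + 1 - 2 * j)))))).
2: { intros j Hj. apply fterm_shift; auto; lia. }
rewrite sum_n_m_mult_l.
set (SS := sum_n_m _ 1 (Nat.div2 (n + 1))).
change (plus ?x ?y) with (x + y). change (mult ?x ?y) with (x * y).
replace (2 * 1 - 1)%nat with 1%nat by reflexivity.
replace (S (S n) + 1 - 2 * 1)%nat with (S n) by lia.
replace (S (S n) + 1)%nat with (S (S (n + 1))) by lia.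
assert (PI <> 0) by (apply PI_neq0).
assert (INR (fact (S n)) <> 0) by apply INR_fact_neq_0.
simpl pow. field. repeat split; auto; apply pow_nonzero; auto.
Qed.
Lemma Q0 K : (0 < K)%nat -> 2 * (-1)^K * Ic K 0 = - (PI/2)^0 * INR (fact 0) * inner_term 0 K.
Proof.
intros HK.
assert (HKn : INR K <> 0) by (apply not_0_INR; lia).
assert (HPI : PI <> 0) by apply PI_neq0.
assert (Hu := pm1 K).
rewrite (DI0 K HK). unfold inner_term. rewrite sum_n_m_zero by (simpl; lia).
      unfold delta_half. simpl Nat.even. cbv iota. replace (@zero R_AbelianMonoid) with R0 by reflexivity. unfold Rdiv. rewrite !Rmult_0_l, Rmult_0_r. change R0 with 0. simpl. ring.
Qed.

Lemma Q1 K : (0 < K)%nat -> 2 * (-1)^K * Ic K 1 = - (PI/2)^1 * INR (fact 1) * inner_term 1 K.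
Proof.
intros HK.
assert (HKn : INR K <> 0) by (apply not_0_INR; lia).
assert (HPI : PI <> 0) by apply PI_neq0.
assert (Hu := pm1 K).
assert (E1 := DI K 0). assert (E2 := DJ0 K).
      unfold inner_term. simpl Nat.div2. rewrite sum_n_n. unfold delta_half. simpl Nat.even. cbv iota.
      simpl INR in *. simpl fact. simpl INR.
      replace (Ic K 1) with (- Js K 0 / (2 * INR K)) by (field_simplify_eq; [lra|auto]).
      replace (Js K 0) with ((1 - (-1)^K) / (2 * INR K)) by (field_simplify_eq; [lra|auto]).
      simpl pow. destruct Hu as [Hu|Hu]; rewrite Hu; field; auto.
Qed.

Lemma Qstep K n : (0 < K)%nat -> 2 * (-1)^K * Ic K n = - (PI/2)^n * INR (fact n) * inner_term n K ->
  2 * (-1)^K * Ic K (S (S n)) = - (PI/2)^(S (S n)) * INR (fact (S (S n))) * inner_term (S (S n)) K.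
Proof.
intros HK IH1; revert HK.
intros HK.
assert (HKn : INR K <> 0) by (apply not_0_INR; lia).
assert (HPI : PI <> 0) by apply PI_neq0.
assert (Hu := pm1 K).
    assert (E1 := DI K (S n)). assert (E2 := DJ K n).
    rewrite inner_rec by auto.
    replace (Ic K (S (S n))) with (- INR (S (S n)) * Js K (S n) / (2 * INR K)) by (field_simplify_eq; [lra|auto]).
    replace (Js K (S n)) with ((INR (S n) * Ic K n - (PI/2)^(S n) * (-1)^K) / (2 * INR K)) by (field_simplify_eq; [lra|auto]).
    assert (Hun : (-1)^K <> 0) by (destruct Hu as [Hu|Hu]; rewrite Hu; lra).
    replace (Ic K n) with (- (PI/2)^n * INR (fact n) * inner_term n K / (2 * (-1)^K)) by (field_simplify_eq; [lra|auto]).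
    change (fact (S (S n))) with (S (S n) * fact (S n))%nat.
    change (fact (S n)) with (S n * fact n)%nat.
    rewrite !mult_INR.
    assert (INR (fact n) <> 0) by apply INR_fact_neq_0.
    assert (INR (S n) <> 0) by (apply not_0_INR; lia).
    set (T := inner_term n K). set (u := (-1)^K) in *.
    rewrite <- !tech_pow_Rmult. set (P := (PI/2)^n).
    assert (INR (S (S n)) <> 0) by (apply not_0_INR; lia).
    set (N1 := INR (S n)) in *. set (N2 := INR (S (S n))) in *. set (Fn := INR (fact n)) in *.
    set (k := INR K) in *. clearbody T P N1 N2 Fn k u.
    destruct Hu as [Hu|Hu]; subst u; field; repeat split; auto.
Qed.

Lemma Qform K : (0 < K)%nat -> forall n,
  2 * (-1)^K * Ic K n = - (PI/2)^n * INR (fact n) * inner_term n K.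
Proof.
intros HK.
assert (H: forall n, 2 * (-1)^K * Ic K n = - (PI/2)^n * INR (fact n) * inner_term n K /\
                     2 * (-1)^K * Ic K (S n) = - (PI/2)^(S n) * INR (fact (S n)) * inner_term (S n) K).
{ induction n as [|n [IH1 IH2]].
  - split; [exact (Q0 K HK) | exact (Q1 K HK)].
  - split; [exact IH2 | exact (Qstep K n HK IH1)]. }
intros n; exact (proj1 (H n)).
Qed.

Lemma RInt_scalR (f : R -> R) c a b : ex_RInt f a b -> RInt (fun x => c * f x) a b = c * RInt f a b.
Proof.
intros Hf. apply is_RInt_unique.
apply (is_RInt_scal (V:=R_NormedModule) f a b c). exact (RInt_correct f a b Hf).
Qed.

Lemma is_RInt_ssum (h : nat -> R -> R) a b N : (forall k, ex_RInt (h k) a b) ->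
  is_RInt (fun x => ssum (fun k => h k x) N) a b (ssum (fun k => RInt (h k) a b) N).
Proof.
intros Hh. induction N.
- assert (H := is_RInt_const (V:=R_NormedModule) a b 0). change (scal (b - a) 0) with ((b - a) * 0) in H. rewrite Rmult_0_r in H. exact H.
- apply (is_RInt_plus (V:=R_NormedModule) (fun x => ssum (fun k => h k x) N) (fun x => h N x)); auto.
  exact (RInt_correct _ a b (Hh N)).
Qed.

Lemma RInt_pow n : RInt (fun x => x^n) 0 (PI/2) = (PI/2)^(S n) / INR (S n).
Proof.
assert (HS : INR (S n) <> 0) by (apply not_0_INR; lia).
replace ((PI/2)^(S n) / INR (S n)) with (minus ((PI/2)^(S n) / INR (S n)) (0^(S n) / INR (S n)))
  by (rewrite minusR; simpl; field; auto).
apply is_RInt_unique.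
apply (is_RInt_derive (V:=R_CompleteNormedModule) (fun x => x^(S n) / INR (S n))).
- intros; auto_derive; auto. destruct n; [simpl; field|]. assert (INR n + 1 <> 0) by (rewrite <- S_INR; apply not_0_INR; lia). field. auto.
- intros; apply (ex_derive_continuous (V:=R_NormedModule)); auto_derive; auto.
Qed.
Theorem theorem2 (n m : nat) :
  RInt (fun x => x ^ n * sin x ^ (2 * m)) 0 (PI / 2)
  = / 4 ^ m * (PI / 2) ^ n *
    (PI * binom (2 * m) m / (2 * INR (n + 1))
     - INR (Factorial.fact n) * Series (fun k : nat => summand n m (k + 1))).
Proof.
assert (H4 : 4 ^ m <> 0) by (apply pow_nonzero; lra).
set (coef := fun k => (-1)^(S k) * binom (2*m) (m + S k)).
set (h := fun k x => coef k * (x^n * cos (2 * INR (S k) * x))).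
rewrite (RInt_ext _ (fun x => / 4^m * binom (2*m) m * x^n + 2 / 4^m * ssum (fun k => h k x) (S m))).
2: { intros x _.
  assert (Hs : sin x ^ (2*m) = / 4^m * (binom (2*m) m + 2 * Fs m (S m) x)).
  { rewrite <- (fourier m (S m) x) by lia. field. auto. }
  rewrite Hs. unfold Fs. unfold Rdiv.
  replace (x ^ n * (/ 4 ^ m * (binom (2 * m) m + 2 * ssum (fun k => (-1) ^ S k * binom (2 * m) (m + S k) * cos (2 * INR (S k) * x)) (S m))))
   with (/ 4 ^ m * binom (2 * m) m * x ^ n + 2 * / 4 ^ m * (x^n * ssum (fun k => (-1) ^ S k * binom (2 * m) (m + S k) * cos (2 * INR (S k) * x)) (S m))) by ring.
  rewrite <- ssum_scal. f_equal. f_equal. apply ssum_ext. intros k _. unfold h, coef. ring. }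
assert (Hex : forall k, ex_RInt (h k) 0 (PI/2)).
{ intros k. apply (ex_RInt_continuous (V:=R_CompleteNormedModule)); intros; unfold h;
  apply (ex_derive_continuous (V:=R_NormedModule)); auto_derive; auto. }
assert (Hexp : ex_RInt (fun x => x^n) 0 (PI/2)).
{ apply (ex_RInt_continuous (V:=R_CompleteNormedModule)); intros;
  apply (ex_derive_continuous (V:=R_NormedModule)); auto_derive; auto. }
assert (Hexs : ex_RInt (fun x => ssum (fun k => h k x) (S m)) 0 (PI/2)).
{ eexists. apply is_RInt_ssum; auto. }
rewrite (RInt_lin (fun x => x^n) (fun x => ssum (fun k => h k x) (S m))) by auto.
rewrite RInt_pow.
rewrite (is_RInt_unique _ _ _ _ (is_RInt_ssum h 0 (PI/2) (S m) Hex)).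
rewrite (series_finite _ (S m)).
2: { intros k Hk. unfold summand. rewrite binom_zero by lia. ring. }
assert (E : 2 * ssum (fun k => RInt (h k) 0 (PI/2)) (S m) =
   - (PI/2)^n * INR (fact n) * ssum (fun k => summand n m (k + 1)) (S m)).
{ rewrite <- !ssum_scal. apply ssum_ext. intros k _.
  unfold h. rewrite RInt_scalR by (exact (exI (S k) n)).
  change (RInt (fun x : R => x ^ n * cos (2 * INR (S k) * x)) 0 (PI / 2)) with (Ic (S k) n).
  unfold coef, summand. rewrite Nat.add_1_r.
  replace (2 * ((-1) ^ S k * binom (2 * m) (m + S k) * Ic (S k) n)) with
     (binom (2 * m) (m + S k) * (2 * (-1) ^ S k * Ic (S k) n)) by ring.
  rewrite Qform by lia. ring. }
replace (2 / 4 ^ m * ssum (fun k : nat => RInt (h k) 0 (PI / 2)) (S m)) with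
  (/ 4^m * (2 * ssum (fun k : nat => RInt (h k) 0 (PI / 2)) (S m))) by (field; auto).
rewrite E. rewrite Nat.add_1_r. simpl pow.
assert (INR (S n) <> 0) by (apply not_0_INR; lia).
match goal with |- ?a = ?b => change (@eq R a b) end. set (SS := ssum (fun k : nat => summand n m (k + 1)) (S m)). clear E Hex Hexs h coef. field. auto.
Qed.
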